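(* Let $A\in H_n$ and $B\in H_m$ have eigenvalues $a_1,\dots,a_n$ and $b_1,\dots,b_m$, respectively, and set $\mathbf a=(a_1,\dots,a_n)$, $\mathbf b=(b_1,\dots,b_m)$. The following are equivalent: (a) there is a completely positive map $\Phi:M_n\to M_m$ with $\Phi(A)=B$; (b) there is an $n\times m$ nonnegative matrix $D$ with $\mathbf b=\mathbf aD$; (c) there are real numbers $\gamma_1,\gamma_2\ge0$ such that $\gamma_2\min_i a_i\le b_j\le\gamma_1\max_i a_i$ for all $1\le j\le m$. Likewise, the following are equivalent: (a') there is a unital completely positive map $\Phi:M_n\to M_m$ with $\Phi(A)=B$; (b') there is an $n\times m$ column stochastic matrix $D$ with $\mathbf b=\mathbf aD$; (c') $\min_i a_i\le b_j\le\max_i a_i$ for all $1\le j\le m$.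
   Context: $H_n$ is the set of $n\times n$ Hermitian matrices. A linear map is completely positive if all its ampliations $I_k\otimes\Phi$ preserve positive semidefiniteness; unital means $\Phi(I_n)=I_m$. A column stochastic matrix is a nonnegative matrix each of whose columns sums to 1. *)

(* Defs.v *)
From HB Require Import structures.
From mathcomp Require Import all_boot all_order all_algebra.
From mathcomp Require Export sesquilinear.
Set Implicit Arguments. Unset Strict Implicit. Unset Printing Implicit Defensive.
Import Order.TTheory GRing.Theory Num.Theory.
Local Open Scope ring_scope.

Section Defs.
Variable C : numClosedFieldType.

Definition adjmx (p q : nat) (M : 'M[C]_(p, q)) : 'M[C]_(q, p) := (map_mx Num.conj M)^T.

Definition psdmx (N : nat) (X : 'M[C]_N) : Prop :=
  X \is hermsymmx /\ forall v : 'cV[C]_N, 0 <= (adjmx v *m X *m v) 0 0.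

(* decomposition of an index of a k*n block matrix into (block index, inner index) *)
Definition unvec_index (k n : nat) (r : 'I_(k * n)) : 'I_k * 'I_n :=
  enum_val (cast_ord (esym (@mxvec_cast k n)) r).

(* (p,q) block (of size n x n) of X : M_k(M_n) seen as a (k*n) x (k*n) matrix *)
Definition blockmx (k n : nat) (X : 'M[C]_(k * n)) (p q : 'I_k) : 'M[C]_n :=
  \matrix_(i, j) X (mxvec_index p i) (mxvec_index q j).

(* ampliation I_k (x) Phi : M_k(M_n) -> M_k(M_m), applied blockwise *)
Definition ampliation (n m k : nat) (Phi : 'M[C]_n -> 'M[C]_m) (X : 'M[C]_(k * n))
  : 'M[C]_(k * m) :=
  \matrix_(r, s) Phi (blockmx X (unvec_index r).1 (unvec_index s).1)
                     (unvec_index r).2 (unvec_index s).2.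

Definition completely_positive (n m : nat) (Phi : 'M[C]_n -> 'M[C]_m) : Prop :=
  forall (k : nat) (X : 'M[C]_(k * n)), psdmx X -> psdmx (ampliation Phi X).

Definition unital (n m : nat) (Phi : 'M[C]_n -> 'M[C]_m) : Prop :=
  Phi 1%:M = 1%:M.

(* a : row vector listing the eigenvalues of A with algebraic multiplicity *)
Definition eigenvalues_of (n : nat) (A : 'M[C]_n) (a : 'rV[C]_n) : Prop :=
  char_poly A = \prod_(i < n) ('X - (a 0 i)%:P).

Definition nonneg_mx (p q : nat) (D : 'M[C]_(p, q)) : Prop :=
  forall i j, 0 <= D i j.

Definition column_stochastic (p q : nat) (D : 'M[C]_(p, q)) : Prop :=
  nonneg_mx D /\ forall j, \sum_i D i j = 1.

Definition rvmin (n : nat) (a : 'rV[C]_n.+1) : C := \big[Num.min/a 0 ord0]_(i < n.+1) a 0 i.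
Definition rvmax (n : nat) (a : 'rV[C]_n.+1) : C := \big[Num.max/a 0 ord0]_(i < n.+1) a 0 i.

End Defs.

(* Main.v *)
Require Import Defs.
From HB Require Import structures.
From mathcomp Require Import all_boot all_order all_algebra.
From mathcomp Require Import sesquilinear spectral fingroup perm.
Set Implicit Arguments. Unset Strict Implicit. Unset Printing Implicit Defensive.
Import Order.TTheory GRing.Theory Num.Theory.
Local Open Scope ring_scope.
Section S.
Variable C : numClosedFieldType.
Local Notation cj := (@Num.conj C).

Lemma hermP n (M : 'M[C]_n) : reflect (forall i j, M i j = cj (M j i)) (M \is hermsymmx).
Proof.
apply: (iffP (@is_hermitianmxP C n false cj M)) => [E i j|E].
  by rewrite {1}E expr0 scale1r !mxE.
by apply/matrixP=> i j; rewrite expr0 scale1r !mxE E.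
Qed.

Lemma unvecK k n (p : 'I_k) (c : 'I_n) : unvec_index (mxvec_index p c) = (p, c).
Proof. by rewrite /unvec_index /mxvec_index cast_ordK enum_rankK. Qed.

Lemma sum_mxvec k n (F : 'I_(k * n) -> C) :
  \sum_r F r = \sum_p \sum_c F (mxvec_index p c).
Proof.
rewrite pair_big /= (reindex (uncurry (@mxvec_index k n))) /=.
  by apply: eq_bigr => -[p c].
by case: (curry_mxvec_bij k n) => g h1 h2; exists g => x _; [apply: h1|apply: h2].
Qed.
Definition qf n (u : 'rV[C]_n) (X : 'M[C]_n) : C :=
  \sum_x \sum_y u 0 x * X x y * cj (u 0 y).
Definition rk1 n (u : 'rV[C]_n) : 'M[C]_n := \matrix_(a, b) (cj (u 0 a) * u 0 b).
Definition kmap (I : finType) n m (w : I -> C) (x : I -> 'rV[C]_n) (y : I -> 'rV[C]_m)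
  (X : 'M[C]_n) : 'M[C]_m := \sum_t (w t * qf (x t) X) *: rk1 (y t).

Lemma qf_lin n (u : 'rV[C]_n) c X Y : qf u (c *: X + Y) = c * qf u X + qf u Y.
Proof.
rewrite /qf mulr_sumr -big_split /=; apply: eq_bigr => i _.
rewrite mulr_sumr -big_split /=; apply: eq_bigr => j _.
rewrite !mxE mulrDr mulrDl !mulrA.
by rewrite [u 0 i * c]mulrC.
Qed.

Lemma kmap_is_linear (I : finType) n m w x y : linear (@kmap I n m w x y).
Proof.
move=> c X Y; rewrite /kmap scaler_sumr -big_split /=; apply: eq_bigr => t _.
by rewrite qf_lin scalerA -scalerDl mulrDr mulrCA.
Qed.

Lemma quadE N (z : 'cV[C]_N) (X : 'M[C]_N) :
  (adjmx z *m X *m z) 0 0 = \sum_r \sum_s cj (z r 0) * X r s * z s 0.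
Proof.
rewrite mxE exchange_big /=; apply: eq_bigr => s _.
rewrite mxE mulr_suml; apply: eq_bigr => r _.
by rewrite /adjmx !mxE.
Qed.

Lemma key_psd k n m (X : 'M[C]_(k * n)) (x : 'rV[C]_n) (y : 'rV[C]_m) (v : 'cV[C]_(k * m)) :
  psdmx X ->
  0 <= \sum_s (\sum_r cj (v r 0) * (qf x (blockmx X (unvec_index r).1 (unvec_index s).1)
         * (cj (y 0 (unvec_index r).2) * y 0 (unvec_index s).2))) * v s 0.
Proof.
move=> [_ PX].
pose g (p : 'I_k) := \sum_b y 0 b * v (mxvec_index p b) 0.
pose z : 'cV[C]_(k * n) := \col_r (cj (x 0 (unvec_index r).2) * g (unvec_index r).1).
have := PX z.
suff -> : (adjmx z *m X *m z) 0 0 =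
  \sum_p \sum_q cj (g p) * qf x (blockmx X p q) * g q.
  suff -> : \sum_s (\sum_r cj (v r 0) * (qf x (blockmx X (unvec_index r).1 (unvec_index s).1)
         * (cj (y 0 (unvec_index r).2) * y 0 (unvec_index s).2))) * v s 0 =
    \sum_p \sum_q cj (g p) * qf x (blockmx X p q) * g q by [].
  under eq_bigr => s _ do rewrite mulr_suml.
  rewrite sum_mxvec.
  under eq_bigr => q _ do under eq_bigr => b _ do rewrite sum_mxvec.
  under eq_bigr => q _ do under eq_bigr => b _ do under eq_bigr => p _ do under eq_bigr => a _ do rewrite !unvecK /=.
  under eq_bigr => q _ do rewrite exchange_big.
  rewrite exchange_big.
  apply: eq_bigr => p _; apply: eq_bigr => q _; rewrite exchange_big /=.
  rewrite /g rmorph_sum !mulr_suml; apply: eq_bigr => a _.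
  rewrite mulr_sumr; apply: eq_bigr => b _.
  rewrite rmorphM.
  by rewrite !mulrA [cj _ * _ * cj _]mulrC !mulrA.
rewrite quadE sum_mxvec.
under eq_bigr => p _ do under eq_bigr => c _ do rewrite sum_mxvec.
under eq_bigr => p _ do under eq_bigr => c _ do under eq_bigr => q _ do under eq_bigr => d _ do rewrite !mxE !unvecK /=.
clearbody z; clearbody g.
apply: eq_bigr => p _; rewrite exchange_big /=; apply: eq_bigr => q _.
rewrite /qf mulr_sumr mulr_suml; apply: eq_bigr => c _.
rewrite mulr_sumr mulr_suml; apply: eq_bigr => d _.
rewrite !mxE rmorphM /= conjCK !mulrA.
by rewrite [x 0 c * _]mulrC.
Qed.

Lemma kmapE (I : finType) n m w x y (X : 'M[C]_n) i j :
  @kmap I n m w x y X i j = \sum_t w t * qf (x t) X * (cj (y t 0 i) * y t 0 j).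
Proof. by rewrite /kmap summxE; apply: eq_bigr => t _; rewrite !mxE. Qed.

Lemma qf_herm n (u : 'rV[C]_n) (M N : 'M[C]_n) :
  (forall i j, M i j = cj (N j i)) -> cj (qf u N) = qf u M.
Proof.
move=> E; rewrite /qf rmorph_sum exchange_big /=; apply: eq_bigr => i _.
rewrite rmorph_sum; apply: eq_bigr => j _.
rewrite !rmorphM /= conjCK -E.
by rewrite mulrC [cj _ * _]mulrC mulrA.
Qed.

Lemma kmap_cp (I : finType) n m w x y :
  (forall t, 0 <= w t) -> completely_positive (@kmap I n m w x y).
Proof.
move=> w0 k X [HX PX]; split.
  apply/hermP => r s; rewrite !mxE !kmapE rmorph_sum; apply: eq_bigr => t _.
  rewrite !rmorphM /= conjCK (geC0_conj (w0 t)) (@qf_herm _ _ (blockmx X (unvec_index r).1 (unvec_index s).1)).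
    by rewrite [cj (y t 0 _) * _]mulrC.
  by move=> i j; rewrite !mxE; move/hermP: HX => ->.
move=> v; rewrite quadE.
have -> : \sum_r \sum_s cj (v r 0) * ampliation (kmap w x y) X r s * v s 0 =
  \sum_t w t * (\sum_s (\sum_r cj (v r 0) *
     (qf (x t) (blockmx X (unvec_index r).1 (unvec_index s).1)
         * (cj (y t 0 (unvec_index r).2) * y t 0 (unvec_index s).2))) * v s 0).
  have -> : \sum_r \sum_s cj (v r 0) * ampliation (kmap w x y) X r s * v s 0 =
     \sum_r \sum_s \sum_t w t * (cj (v r 0) *
     (qf (x t) (blockmx X (unvec_index r).1 (unvec_index s).1)
         * (cj (y t 0 (unvec_index r).2) * y t 0 (unvec_index s).2)) * v s 0).
    apply: eq_bigr => r _; apply: eq_bigr => s _.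
    rewrite mxE kmapE mulr_sumr mulr_suml; apply: eq_bigr => t _.
    by rewrite !mulrA [cj _ * w t]mulrC.
  under eq_bigr => r _ do rewrite exchange_big.
  rewrite exchange_big; apply: eq_bigr => t _.
  rewrite mulr_sumr exchange_big; apply: eq_bigr => s _.
  by rewrite mulr_suml mulr_sumr.
apply: sumr_ge0 => t _; apply: mulr_ge0 => //.
exact: key_psd.
Qed.

Lemma cp_pos n m (Phi : 'M[C]_n -> 'M[C]_m) (u : 'rV[C]_n) (t : 'rV[C]_m) :
  completely_positive Phi -> 0 <= qf t (Phi (rk1 u)).
Proof.
move=> cp.
pose X : 'M[C]_(1 * n) := \matrix_(r, s) rk1 u (unvec_index r).2 (unvec_index s).2.
have bX p q : blockmx X p q = rk1 u.
  by apply/matrixP => i j; rewrite !mxE !unvecK.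
have pX : psdmx X.
  split.
    by apply/hermP => r s; rewrite !mxE rmorphM /= conjCK mulrC.
  move=> v; rewrite quadE.
  pose S := \sum_s u 0 (unvec_index s).2 * v s 0.
  have -> : \sum_r \sum_s cj (v r 0) * X r s * v s 0 = cj S * S.
    rewrite /S rmorph_sum mulr_suml; apply: eq_bigr => r _.
    rewrite mulr_sumr; apply: eq_bigr => s _.
    by rewrite !mxE rmorphM /= !mulrA [cj (v r 0) * _]mulrC.
  by rewrite mulrC mul_conjC_ge0.
have [_ /(_ (\col_r cj (t 0 (unvec_index r).2)))] := cp 1%N X pX.
rewrite quadE sum_mxvec big_ord1 /qf.
under eq_bigr => c _ do rewrite sum_mxvec big_ord1.
under eq_bigr => c _ do under eq_bigr => d _ do rewrite !mxE !unvecK /= bX conjCK.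
by [].
Qed.

Lemma char_poly_conj n (Qi M Q : 'M[C]_n) : Qi *m Q = 1%:M ->
  char_poly (Qi *m M *m Q) = char_poly M.
Proof.
move=> QQ; rewrite /char_poly /char_poly_mx.
have mQQ : map_mx (@polyC C) Qi *m map_mx (@polyC C) Q = 1%:M by rewrite -map_mxM QQ map_mx1.
have -> : 'X%:M - map_mx (@polyC C) (Qi *m M *m Q) =
  map_mx (@polyC C) Qi *m ('X%:M - map_mx (@polyC C) M) *m map_mx (@polyC C) Q.
  rewrite mulmxBr mulmxBl !map_mxM; congr (_ - _).
  by rewrite scalar_mxC -mulmxA mQQ mulmx1.
rewrite !det_mulmx mulrC mulrA -det_mulmx.
by rewrite [map_mx _ Q *m _]mulmx1C // det1 mul1r.
Qed.

Lemma perm_of_roots n (a d : 'rV[C]_n) :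
  \prod_(i < n) ('X - (a 0 i)%:P) = \prod_(i < n) ('X - (d 0 i)%:P) ->
  exists p : 'S_n, forall i, a 0 i = d 0 (p i).
Proof.
move=> E.
have : perm_eq [tuple a 0 i | i < n] [tuple d 0 i | i < n].
  apply: prod_XsubC_eq; rewrite !big_tuple.
  by under eq_bigr => i _ do rewrite tnth_mktuple; under [RHS]eq_bigr => i _ do rewrite tnth_mktuple.
move/tuple_permP => [p Ep]; exists p => i.
have Et : [tuple a 0 i | i < n] = [tuple tnth [tuple d 0 i | i < n] (p i) | i < n] := val_inj Ep.
by have := congr1 (fun t => tnth t i) Et; rewrite !tnth_mktuple.
Qed.

Lemma spec n (A : 'M[C]_n) (a : 'rV[C]_n) : A \is hermsymmx -> eigenvalues_of A a ->
  exists P : 'M[C]_n, [/\ forall i k, \sum_x P i x * cj (P k x) = (i == k)%:R,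
     \sum_i rk1 (row i P) = 1%:M,
     forall i, a 0 i \is Num.real &
     A = \sum_i a 0 i *: rk1 (row i P)].
Proof.
move=> HA Ea.
have N := hermitian_normalmx HA.
have U := spectral_unitarymx A.
have dr := hermitian_spectral_diag_real HA.
have /orthomx_spectralP EA := N.
rewrite invmx_unitary // in EA.
move: EA U dr; set P0 := spectralmx A; set d := spectral_diag A => EA U dr.
have Q1 := unitarymxP U.
have Q2 := mulmx1C Q1.
have Ecp : char_poly A = \prod_i ('X - (d 0 i)%:P).
  rewrite EA char_poly_conj // char_poly_trig ?diag_mx_is_trig //.
  by apply: eq_bigr => i _; rewrite !mxE eqxx mulr1n.
have [p Ep] := perm_of_roots (etrans (esym Ea) Ecp).
exists (\matrix_(i, x) P0 (p i) x); split.
- move=> i k; have := congr1 (fun M : 'M[C]_n => M (p i) (p k)) Q1; rewrite /= !mxE.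
  rewrite (inj_eq perm_inj) => <-; apply: eq_bigr => x _; rewrite !mxE.
  reflexivity.
- apply/matrixP => x y; have := congr1 (fun M : 'M[C]_n => M x y) Q2; rewrite /= !mxE => <-.
  rewrite summxE [RHS](reindex_inj (@perm_inj _ p)) /=; apply: eq_bigr => i _.
  by rewrite !mxE.
- by move=> i; rewrite Ep; move/mxOverP: dr; apply.
- apply/matrixP => x y; rewrite {1}EA summxE mul_mx_diag mxE.
  rewrite [LHS](reindex_inj (@perm_inj _ p)) /=; apply: eq_bigr => i _.
  by rewrite !mxE Ep !mulrA [_ * d 0 _]mulrC.
Qed.

Lemma maxR (x y : C) : x \is Num.real -> y \is Num.real ->
  [/\ x <= Num.max x y, y <= Num.max x y & (Num.max x y = x \/ Num.max x y = y)].
Proof.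
move=> xr yr; rewrite /Order.max; case: ifP => h.
  by split; [exact: ltW | exact: lexx | right].
by split; [exact: lexx | rewrite real_leNgt ?h | left].
Qed.

Lemma minR (x y : C) : x \is Num.real -> y \is Num.real ->
  [/\ Num.min x y <= x, Num.min x y <= y & (Num.min x y = x \/ Num.min x y = y)].
Proof.
move=> xr yr; rewrite /Order.min; case: ifP => h.
  by split; [exact: lexx | exact: ltW | left].
by split; [rewrite real_leNgt ?h | exact: lexx | right].
Qed.

Lemma bigmax_props (I : eqType) (r : seq I) (F : I -> C) x0 :
  x0 \is Num.real -> (forall i, F i \is Num.real) ->
  [/\ \big[Num.max/x0]_(i <- r) F i \is Num.real, x0 <= \big[Num.max/x0]_(i <- r) F i,
    (forall i, i \in r -> F i <= \big[Num.max/x0]_(i <- r) F i) &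
    (\big[Num.max/x0]_(i <- r) F i = x0 \/ exists i, \big[Num.max/x0]_(i <- r) F i = F i)].
Proof.
move=> x0r Fr; elim: r => [|j r [IHr IH0 IHin IHw]].
  by rewrite big_nil; split; [done | exact: lexx | done | left].
rewrite big_cons; have [h1 h2 h3] := maxR (Fr j) IHr.
split.
- by case: h3 => ->.
- exact: le_trans IH0 h2.
- move=> i; rewrite inE => /orP [/eqP -> //| /IHin H]; exact: le_trans H h2.
- case: h3 => ->; first by right; exists j.
  by case: IHw => [->|[i ->]]; [left|right; exists i].
Qed.

Lemma bigmin_props (I : eqType) (r : seq I) (F : I -> C) x0 :
  x0 \is Num.real -> (forall i, F i \is Num.real) ->
  [/\ \big[Num.min/x0]_(i <- r) F i \is Num.real, \big[Num.min/x0]_(i <- r) F i <= x0,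
    (forall i, i \in r -> \big[Num.min/x0]_(i <- r) F i <= F i) &
    (\big[Num.min/x0]_(i <- r) F i = x0 \/ exists i, \big[Num.min/x0]_(i <- r) F i = F i)].
Proof.
move=> x0r Fr; elim: r => [|j r [IHr IH0 IHin IHw]].
  by rewrite big_nil; split; [done | exact: lexx | done | left].
rewrite big_cons; have [h1 h2 h3] := minR (Fr j) IHr.
split.
- by case: h3 => ->.
- exact: le_trans h2 IH0.
- move=> i; rewrite inE => /orP [/eqP -> //| /IHin H]; exact: le_trans h2 H.
- case: h3 => ->; first by right; exists j.
  by case: IHw => [->|[i ->]]; [left|right; exists i].
Qed.

Lemma rvmaxP n (a : 'rV[C]_n.+1) : (forall i, a 0 i \is Num.real) ->
  [/\ rvmax a \is Num.real, forall i, a 0 i <= rvmax a & exists i, rvmax a = a 0 i].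
Proof.
move=> ar; rewrite /rvmax.
have [h1 _ h3 h4] := bigmax_props (index_enum 'I_n.+1) (ar ord0) ar.
split => //; first by move=> i; apply: h3; rewrite mem_index_enum.
by case: h4 => [->|[i ->]]; [exists ord0 | exists i].
Qed.

Lemma rvminP n (a : 'rV[C]_n.+1) : (forall i, a 0 i \is Num.real) ->
  [/\ rvmin a \is Num.real, forall i, rvmin a <= a 0 i & exists i, rvmin a = a 0 i].
Proof.
move=> ar; rewrite /rvmin.
have [h1 _ h3 h4] := bigmin_props (index_enum 'I_n.+1) (ar ord0) ar.
split => //; first by move=> i; apply: h3; rewrite mem_index_enum.
by case: h4 => [->|[i ->]]; [exists ord0 | exists i].
Qed.

Lemma sum_delta n (f : 'I_n -> C) k : \sum_i f i * (i == k)%:R = f k.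
Proof.
rewrite (bigD1 k) //= eqxx mulr1 big1 ?addr0 // => i /negbTE ->.
by rewrite mulr0.
Qed.

Lemma twopt n m (a : 'rV[C]_n) (k1 k2 : 'I_n) (c1 c2 : 'I_m -> C) j :
  let D := \matrix_(i, j) (c1 j * (i == k1)%:R + c2 j * (i == k2)%:R) in
  (a *m D) 0 j = c1 j * a 0 k1 + c2 j * a 0 k2 /\ \sum_i D i j = c1 j + c2 j.
Proof.
move=> D; split.
  rewrite mxE; under eq_bigr => i _ do rewrite mxE mulrDr !mulrA.
  rewrite big_split /= !sum_delta.
  by rewrite ![_ * c1 j]mulrC ![_ * c2 j]mulrC.
under eq_bigr => i _ do rewrite mxE.
rewrite big_split /=.
have sd (c : C) k : \sum_(i < n) c * (i == k)%:R = c.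
  by have := sum_delta (fun _ => c) k.
by rewrite !sd.
Qed.

Lemma qf_sum (I : finType) n (u : 'rV[C]_n) (c : I -> C) (M : I -> 'M[C]_n) :
  qf u (\sum_i c i *: M i) = \sum_i c i * qf u (M i).
Proof.
rewrite /qf.
under eq_bigr => x _ do under eq_bigr => y _ do rewrite summxE mulr_sumr mulr_suml.
under eq_bigr => x _ do rewrite exchange_big.
rewrite exchange_big; apply: eq_bigr => i _.
rewrite mulr_sumr; apply: eq_bigr => x _.
rewrite mulr_sumr; apply: eq_bigr => y _.
by rewrite !mxE !mulrA [u 0 x * c i]mulrC.
Qed.

Lemma qf_onb n (P : 'M[C]_n) : (forall i k, \sum_x P i x * cj (P k x) = (i == k)%:R) ->
  forall k i, qf (row k P) (rk1 (row i P)) = (k == i)%:R.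
Proof.
move=> oP k i.
have -> : qf (row k P) (rk1 (row i P)) =
   (\sum_x P k x * cj (P i x)) * (\sum_y P i y * cj (P k y)).
  rewrite /qf mulr_suml; apply: eq_bigr => x _.
  rewrite mulr_sumr; apply: eq_bigr => y _.
  by rewrite !mxE !mulrA.
by rewrite !oP eq_sym; case: (i == k); rewrite ?mulr1 ?mulr0.
Qed.

Lemma qf_1 n (P : 'M[C]_n) : (forall i k, \sum_x P i x * cj (P k x) = (i == k)%:R) ->
  forall k, qf (row k P) 1%:M = 1.
Proof.
move=> oP k; apply: (@eq_trans _ _ (\sum_x P k x * cj (P k x))); last by rewrite oP eqxx.
rewrite /qf; apply: eq_bigr => x _.
under eq_bigr => y _ do rewrite !mxE mulrAC eq_sym.
by rewrite (sum_delta (fun y => P k x * cj (P k y))).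
Qed.

Lemma qf_diag n (P : 'M[C]_n) (a : 'rV[C]_n) :
  (forall i k, \sum_x P i x * cj (P k x) = (i == k)%:R) ->
  forall k, qf (row k P) (\sum_i a 0 i *: rk1 (row i P)) = a 0 k.
Proof.
move=> oP k; rewrite qf_sum.
under eq_bigr => i _ do rewrite qf_onb // eq_sym.
exact: sum_delta.
Qed.
End S.

HB.instance Definition _ (C : numClosedFieldType) (I : finType) n m w x y :=
  GRing.isLinear.Build C 'M[C]_n 'M[C]_m *:%R (@kmap C I n m w x y) (@kmap_is_linear C I n m w x y).


Section T.
Variable C : numClosedFieldType.
Local Notation cj := (@Num.conj C).

Lemma part_cp n m (A : 'M[C]_n) (B : 'M[C]_m) (a : 'rV[C]_n) (b : 'rV[C]_m)
  (P : 'M[C]_n) (Q : 'M[C]_m) :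
  (forall i k, \sum_x P i x * cj (P k x) = (i == k)%:R) ->
  \sum_i rk1 (row i P) = 1%:M ->
  A = \sum_i a 0 i *: rk1 (row i P) ->
  (forall i k, \sum_x Q i x * cj (Q k x) = (i == k)%:R) ->
  \sum_i rk1 (row i Q) = 1%:M ->
  B = \sum_i b 0 i *: rk1 (row i Q) ->
  ((exists Phi : {linear 'M[C]_n -> 'M[C]_m}, completely_positive Phi /\ Phi A = B)
   <-> (exists D : 'M[C]_(n, m), nonneg_mx D /\ b = a *m D))
  /\
  ((exists Phi : {linear 'M[C]_n -> 'M[C]_m},
       completely_positive Phi /\ unital Phi /\ Phi A = B)
   <-> (exists D : 'M[C]_(n, m), column_stochastic D /\ b = a *m D)).
Proof.
move=> oP cP EA oQ cQ EB.
pose Dof (Phi : {linear 'M[C]_n -> 'M[C]_m}) : 'M[C]_(n, m) :=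
  \matrix_(i, j) qf (row j Q) (Phi (rk1 (row i P))).
have Dpos (Phi : {linear 'M[C]_n -> 'M[C]_m}) : completely_positive Phi -> nonneg_mx (Dof Phi).
  by move=> cp i j; rewrite mxE; exact: cp_pos.
have Deq (Phi : {linear 'M[C]_n -> 'M[C]_m}) : Phi A = B -> b = a *m Dof Phi.
  move=> PA; apply/rowP => j.
  rewrite -[LHS](qf_diag b oQ j) -EB -PA EA linear_sum.
  under eq_bigr => i _ do rewrite linearZ.
  rewrite qf_sum !mxE; apply: eq_bigr => i _; by rewrite mxE.
have Dsum (Phi : {linear 'M[C]_n -> 'M[C]_m}) : unital Phi -> forall j, \sum_i Dof Phi i j = 1.
  move=> uP j; rewrite -(qf_1 oQ j) -uP -cP.
  have -> : \sum_i rk1 (row i P) = \sum_i 1 *: rk1 (row i P).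
    by apply: eq_bigr => i _; rewrite scale1r.
  rewrite linear_sum; under [in RHS]eq_bigr => i _ do rewrite linearZ.
  rewrite qf_sum; apply: eq_bigr => i _; by rewrite mxE mul1r.
pose Kof (D : 'M[C]_(n, m)) := (kmap (fun t : 'I_n * 'I_m => D t.1 t.2)
   (fun t => row t.1 P) (fun t => row t.2 Q) : {linear 'M[C]_n -> 'M[C]_m}).
have Kcp D : nonneg_mx D -> completely_positive (Kof D).
  by move=> D0; apply: kmap_cp => t; exact: D0.
have KA D : b = a *m D -> Kof D A = B.
  move=> bD; rewrite EB /= /kmap.
  rewrite -(pair_bigA _ (fun i j => (D i j * qf (row i P) A) *: rk1 (row j Q))) /=.
  rewrite exchange_big; apply: eq_bigr => j _.
  rewrite bD mxE scaler_suml; apply: eq_bigr => i _.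
  by rewrite EA qf_diag // mulrC.
have K1 D : column_stochastic D -> unital (Kof D).
  move=> [_ Ds]; rewrite /unital -cQ /= /kmap.
  rewrite -(pair_bigA _ (fun i j => (D i j * qf (row i P) 1%:M) *: rk1 (row j Q))) /=.
  rewrite exchange_big; apply: eq_bigr => j _.
  under eq_bigr => i _ do rewrite qf_1 // mulr1.
  by rewrite -scaler_suml Ds scale1r.
split; split.
- by move=> [Phi [cp PA]]; exists (Dof Phi); split; [exact: Dpos | exact: Deq].
- by move=> [D [D0 bD]]; exists (Kof D); split; [exact: Kcp | exact: KA].
- move=> [Phi [cp [uP PA]]]; exists (Dof Phi); split; last exact: Deq.
  by split; [exact: Dpos | exact: Dsum].
- move=> [D [Ds bD]]; exists (Kof D); split; first by apply: Kcp; case: Ds.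
  by split; [exact: K1 | exact: KA].
Qed.

Lemma rcase (x : C) : x \is Num.real -> ~~ (0 <= x) -> x <= 0.
Proof. by move=> xr h; have := real_leVge (real0 C) xr; rewrite (negbTE h). Qed.

Lemma part_real n m (a : 'rV[C]_n.+1) (b : 'rV[C]_m.+1) :
  (forall i, a 0 i \is Num.real) -> (forall j, b 0 j \is Num.real) ->
  ((exists D : 'M[C]_(n.+1, m.+1), nonneg_mx D /\ b = a *m D)
   <-> (exists g1 g2 : C, [/\ 0 <= g1, 0 <= g2 &
          forall j, g2 * rvmin a <= b 0 j /\ b 0 j <= g1 * rvmax a]))
  /\
  ((exists D : 'M[C]_(n.+1, m.+1), column_stochastic D /\ b = a *m D)
   <-> (forall j, rvmin a <= b 0 j /\ b 0 j <= rvmax a)).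
Proof.
move=> ar br.
have [Mr Mge [imax Emax]] := rvmaxP ar.
have [mr mle [imin Emin]] := rvminP ar.
move: Mr Mge Emax mr mle Emin; set M := rvmax a; set mn := rvmin a.
move=> Mr Mge Emax mr mle Emin.
have bnd (D : 'M[C]_(n.+1, m.+1)) : nonneg_mx D -> forall j,
    mn * (\sum_i D i j) <= (a *m D) 0 j /\ (a *m D) 0 j <= M * \sum_i D i j.
  move=> D0 j; rewrite mxE !mulr_sumr; split; apply: ler_sum => i _.
    by apply: ler_wpM2r; [exact: D0 | exact: mle].
  by apply: ler_wpM2r; [exact: D0 | exact: Mge].
split; split.
- move=> [D [D0 ->]].
  pose S := \sum_j \sum_i D i j.
  have s0 j : 0 <= \sum_i D i j by apply: sumr_ge0 => i _; exact: D0.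
  have S0 : 0 <= S by apply: sumr_ge0 => j _; exact: s0.
  have sS j : \sum_i D i j <= S.
    by rewrite /S (bigD1 j) //= lerDl; apply: sumr_ge0 => k _; exact: s0.
  exists (if 0 <= M then S else 0), (if mn <= 0 then S else 0).
  split; [by case: ifP | by case: ifP | move=> j].
  have [l u] := bnd D D0 j; split.
    case: ifP => hm.
      apply: le_trans l; rewrite mulrC; by apply: ler_wnM2l; [exact: hm | exact: sS].
    apply: le_trans l; rewrite mul0r; apply: mulr_ge0 (s0 j).
    have := real_leVge (real0 C) mr; rewrite hm orbF; done.
  apply: le_trans u _; case: ifP => hM.
    rewrite [S * _]mulrC; by apply: ler_wpM2l; [exact: hM | exact: sS].
  by rewrite mul0r; apply: mulr_le0_ge0 (s0 j); apply: rcase => //; rewrite hM.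
- move=> [g1 [g2 [g10 g20 Hb]]].
  have mneg j : ~~ (0 <= b 0 j) -> mn <= 0.
    move=> hb; apply: rcase => //; apply/negP => h0; move/negP: hb; apply.
    by apply: le_trans (Hb j).1; apply: mulr_ge0.
  have mn0 j : ~~ (0 <= b 0 j) -> mn != 0.
    by move=> hb; apply/eqP => e; move: (Hb j).1; rewrite e mulr0 => h; rewrite h in hb.
  pose c1 j := if 0 <= b 0 j then (if 0 < M then b 0 j / M else 0) else 0.
  pose c2 j := if 0 <= b 0 j then 0 else b 0 j / mn.
  exists (\matrix_(i, j) (c1 j * (i == imax)%:R + c2 j * (i == imin)%:R)); split.
    move=> i j; rewrite mxE; apply: addr_ge0; apply: mulr_ge0 => //; rewrite /c1 /c2.
      case: ifP => hb //; case: ifP => hM //.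
      by apply: divr_ge0 => //; apply: ltW.
    case: ifP => hb //; apply: mulr_le0.
      by apply: rcase => //; rewrite hb.
    by rewrite invr_le0; apply: (mneg j); rewrite hb.
  apply/rowP => j; have [E _] := twopt a imax imin c1 c2 j.
  rewrite E -Emax -Emin /c1 /c2; case: ifP => hb.
    case: ifP => hM.
      by rewrite mul0r addr0 divfK // lt0r_neq0.
    rewrite !mul0r addr0; apply/eqP; rewrite eq_le hb andbT.
    apply: le_trans (Hb j).2 _; apply: mulr_ge0_le0 => //.
    by rewrite real_leNgt ?hM.
  by rewrite mul0r add0r divfK // (mn0 j) // hb.
- move=> [D [[D0 Ds] ->]] j; have [l u] := bnd D D0 j.
  by rewrite Ds mulr1 in l; rewrite Ds mulr1 in u; split.
- move=> Hb.
  have Mmn : mn <= M := le_trans (mle ord0) (Mge ord0).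
  have dpos : M != mn -> 0 < M - mn by move=> e; rewrite subr_gt0 lt_def e Mmn.
  pose c1 j := if M == mn then 0 else (b 0 j - mn) / (M - mn).
  pose c2 j := 1 - c1 j.
  have c1ge j : 0 <= c1 j /\ c1 j <= 1.
    rewrite /c1; case: ifP => e; first by rewrite lexx ler01.
    have d0 := dpos (negbT e).
    split; first by apply: divr_ge0; [rewrite subr_ge0; exact: (Hb j).1 | exact: ltW].
    by rewrite ler_pdivrMr // mul1r lerD2r; exact: (Hb j).2.
  exists (\matrix_(i, j) (c1 j * (i == imax)%:R + c2 j * (i == imin)%:R)).
  split; first split.
  + move=> i j; rewrite mxE; have [h1 h2] := c1ge j.
    by apply: addr_ge0; apply: mulr_ge0 => //; rewrite /c2 subr_ge0.
  + by move=> j; have [_ ->] := twopt a imax imin c1 c2 j; rewrite /c2 addrC subrK.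
  apply/rowP => j; have [-> _] := twopt a imax imin c1 c2 j.
  rewrite -Emax -Emin /c2 /c1; case: ifP => e.
    rewrite mul0r add0r subr0 mul1r; apply/eqP; rewrite eq_le (Hb j).1 andbT.
    by rewrite -(eqP e); exact: (Hb j).2.
  have d0 := dpos (negbT e).
  have tE : (b 0 j - mn) / (M - mn) * (M - mn) = b 0 j - mn by rewrite divfK ?lt0r_neq0.
  move: tE; set t := (b 0 j - mn) / (M - mn) => tE.
  rewrite mulrBl mul1r addrCA -mulrBr tE.
  by rewrite addrC subrK.
Qed.
End T.
Unset Implicit Arguments.

Theorem theorem3p1 (C : numClosedFieldType) (n m : nat)
  (A : 'M[C]_n.+1) (B : 'M[C]_m.+1) (a : 'rV[C]_n.+1) (b : 'rV[C]_m.+1) :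
  A \is hermsymmx -> B \is hermsymmx ->
  eigenvalues_of A a -> eigenvalues_of B b ->
  ((exists Phi : {linear 'M[C]_n.+1 -> 'M[C]_m.+1},
       completely_positive Phi /\ Phi A = B)
   <-> (exists D : 'M[C]_(n.+1, m.+1), nonneg_mx D /\ b = a *m D))
  /\
  ((exists D : 'M[C]_(n.+1, m.+1), nonneg_mx D /\ b = a *m D)
   <-> (exists g1 g2 : C, [/\ 0 <= g1, 0 <= g2 &
          forall j, g2 * rvmin a <= b 0 j /\ b 0 j <= g1 * rvmax a]))
  /\
  ((exists Phi : {linear 'M[C]_n.+1 -> 'M[C]_m.+1},
       completely_positive Phi /\ unital Phi /\ Phi A = B)
   <-> (exists D : 'M[C]_(n.+1, m.+1), column_stochastic D /\ b = a *m D))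
  /\
  ((exists D : 'M[C]_(n.+1, m.+1), column_stochastic D /\ b = a *m D)
   <-> (forall j, rvmin a <= b 0 j /\ b 0 j <= rvmax a)).
Proof.
move=> HA HB Ea Eb.
have [P [oP cP ra EA]] := spec HA Ea.
have [Q [oQ cQ rb EB]] := spec HB Eb.
have [h1 h3] := part_cp oP cP EA oQ cQ EB.
have [h2 h4] := part_real ra rb.
by split; [exact: h1 | split; [exact: h2 | split; [exact: h3 | exact: h4]]].
Qed.
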